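(* Let $\sigma\subseteq E_0$ be a reasonable strategy of player $0$ in the escape arena $\mathcal{A}_\bot$. Define $\mathcal{V}_\bot:V\cup\{\bot\}\to\mathcal{P}$ by $\mathcal{V}_\bot(\bot)=\text{\o}$ and $\mathcal{V}_\bot(s)=\infty$ for $s\in V$, and the operator $F_\sigma$ on maps $\mathcal{V}:V\cup\{\bot\}\to\mathcal{P}$ by $F_\sigma[\mathcal{V}](\bot)=\text{\o}$, $F_\sigma[\mathcal{V}](s)=\wp(s)+\min^{\preceq}\{\mathcal{V}(t)\mid (s,t)\in E_1\}$ if $s\in V_1$, and $F_\sigma[\mathcal{V}](s)=\wp(s)+\max^{\preceq}\{\mathcal{V}(t)\mid (s,t)\in\sigma\}$ if $s\in V_0$. Then the valuation $\mathcal{V}_\sigma$ is the limit of the sequence $F_\sigma^i[\mathcal{V}_\bot]$ as $i\to\infty$, and this limit is reached after at most $|V|$ iterations.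
   Context: Parity game arena: $\mathcal{A}=(V,E,o,c)$ with $V$ finite, $E\subseteq V\times V$, every vertex has a successor, owner map $o:V\to\{0,1\}$, colouring $c:V\to\{0,\dots,d-1\}$; $V_i=o^{-1}(i)$. An infinite vertex sequence is won by player $0$ iff the largest colour occurring infinitely often is even. A cycle is $i$-dominated if its largest colour has parity $i$. Escape arena $\mathcal{A}_\bot$: vertices $V\cup\{\bot\}$, edges $E\cup(V_0\times\{\bot\})$, $\bot$ owned by player $0$ with no outgoing edges. $E_0$ = edges of $\mathcal{A}_\bot$ leaving $V_0$, $E_1=E\cap(V_1\times V)$. A strategy of player $i$ is a set $\sigma\subseteq E_i$ with $s\sigma\neq\emptyset$ for all $s\in V_i$. $\mathcal{A}_\bot|_{\sigma,\tau}$ has edges $\sigma\cup\tau$, $\mathcal{A}_\bot|_\sigma$ has edges $\sigma\cup E_1$; plays are maximal paths (infinite or ending in $\bot$). Colour profiles $\mathcal{P}=\mathbb{Z}^d\cup\{-\infty,\infty\}$, $\text{\o}$ zero vector; $\wp(s)$ unit vector at coordinate $c(s)$; for a finite path the sum over vertices in $V$; infinite play: $\infty$ if won by player $0$, else $-\infty$. Addition componentwise, $x+\pm\infty=\pm\infty$. Order $\prec$: $-\infty$ least, $\infty$ greatest; for distinct $p,p'\in\mathbb{Z}^d$ with $k$ the largest differing index, $p\prec p'$ iff ($k$ even, $p_k<p'_k$) or ($k$ odd, $p_k>p'_k$). Valuation: $\mathcal{V}_\sigma(\bot)=\text{\o}$, $\mathcal{V}_\sigma(s)=\min^\prec_\tau\max^\prec\{\wp(\pi)\mid\pi$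 a play in $\mathcal{A}_\bot|_{\sigma,\tau}$ from $s\}$, min over player-$1$ strategies $\tau$. $\sigma$ is reasonable if $\mathcal{A}_\bot|_\sigma$ has no $1$-dominated cycle. *)

(* Defs.v *)
From HB Require Import structures.
From mathcomp Require Import all_boot all_order all_algebra.
Set Implicit Arguments. Unset Strict Implicit. Unset Printing Implicit Defensive.
Import Order.TTheory GRing.Theory Num.Theory.
Local Open Scope ring_scope.

(* Colour profiles  P = Z^d ∪ {-oo, +oo}.  Vectors are finite functions 'I_d -> int. *)
Inductive profile (d : nat) :=
  | PNegInf
  | PInf
  | PVec of {ffun 'I_d -> int}.
Arguments PNegInf {d}.
Arguments PInf {d}.

Section Profiles.
Variable d : nat.
Implicit Types p q : {ffun 'I_d -> int}.

Definition vec_lt p q : bool :=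
  [exists k : 'I_d,
     [&& p k != q k,
         [forall j : 'I_d, (k < j)%N ==> (p j == q j)] &
         (if odd k then q k < p k else p k < q k)]].

Definition prof_lt (x y : profile d) : bool :=
  match x, y with
  | PNegInf, PNegInf => false
  | PNegInf, _ => true
  | _, PNegInf => false
  | PInf, _ => false
  | _, PInf => true
  | PVec p, PVec q => vec_lt p q
  end.

Definition prof_le (x y : profile d) : bool :=
  match x, y with
  | PVec p, PVec q => (p == q) || vec_lt p q
  | PNegInf, _ => true
  | _, PNegInf => false
  | _, PInf => true
  | PInf, _ => false
  end.

Definition vadd p (x : profile d) : profile d :=
  match x with
  | PVec q => PVec (p + q)
  | PInf => PInf
  | PNegInf => PNegInf
  end.

Definition pmin2 (x y : profile d) := if prof_le x y then x else y.
Definition pmax2 (x y : profile d) := if prof_le x y then y else x.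
(* min / max (w.r.t. the order above) of a finite list; used on nonempty lists *)
Definition pmin (s : seq (profile d)) := foldr pmin2 PInf s.
Definition pmax (s : seq (profile d)) := foldr pmax2 PNegInf s.

Definition isMaxOf (S : profile d -> Prop) (x : profile d) :=
  S x /\ forall y, S y -> prof_le y x.
Definition isMinOf (S : profile d -> Prop) (x : profile d) :=
  S x /\ forall y, S y -> prof_le x y.
End Profiles.

Section Arena.
(* Arena A = (V, E, o, c): o v = false means v ∈ V_0, o v = true means v ∈ V_1.
   The escape arena has vertex set option V, with None = ⊥. *)
Variables (V : finType) (d : nat) (E : rel V) (o : V -> bool) (c : V -> 'I_d).

Definition E0 : {set V * option V} :=
  [set e | ~~ o e.1 && (if e.2 is Some t then E e.1 t else true)].
Definition E1 : {set V * option V} :=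
  [set e | o e.1 && (if e.2 is Some t then E e.1 t else false)].

Definition strategy0 (sigma : {set V * option V}) : Prop :=
  sigma \subset E0 /\ forall s, ~~ o s -> exists t, (s, t) \in sigma.
Definition strategy1 (tau : {set V * option V}) : Prop :=
  tau \subset E1 /\ forall s, o s -> exists t, (s, t) \in tau.

(* edge relation of A_⊥|_σ restricted to V (⊥ lies on no cycle) *)
Definition edge_sigma (sigma : {set V * option V}) (v w : V) : bool :=
  ((v, Some w) \in sigma) || ((v, Some w) \in E1).

Definition reasonable (sigma : {set V * option V}) : Prop :=
  forall cyc : seq V, cyc != [::] -> cycle (edge_sigma sigma) cyc ->
    ~~ odd (\max_(v <- cyc) (c v : nat)).

Definition st_edge (sigma tau : {set V * option V}) (u w : option V) : bool :=
  if u is Some a then ((a, w) \in sigma) || ((a, w) \in tau) else false.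

Definition wp (v : V) : {ffun 'I_d -> int} := [ffun i => ((i == c v) : nat)%:Z].

Definition path_profile (q : seq (option V)) : {ffun 'I_d -> int} :=
  \sum_(u <- q) (if u is Some v then wp v else 0).

Definition inf_often (f : nat -> option V) (k : nat) : Prop :=
  forall N, exists n, (N <= n)%N /\ exists v, f n = Some v /\ (c v : nat) = k.

Definition won0 (f : nat -> option V) : Prop :=
  exists k, inf_often f k /\ ~~ odd k /\ forall k', inf_often f k' -> (k' <= k)%N.

Definition PlayProfile (sigma tau : {set V * option V}) (s : V) (x : profile d) : Prop :=
  (exists p : seq (option V),
      path (st_edge sigma tau) (Some s) p /\
      (forall y, ~~ st_edge sigma tau (last (Some s) p) y) /\
      x = PVec (path_profile (Some s :: p)))
  \/
  (exists f : nat -> option V,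
      f 0%N = Some s /\ (forall n, st_edge sigma tau (f n) (f n.+1)) /\
      ((won0 f /\ x = PInf) \/ (~ won0 f /\ x = PNegInf))).

(* v is the valuation V_σ(x) = min_τ max {℘(π) | π play of A_⊥|_{σ,τ} from x}
   (asserting in particular that all these max / min exist) *)
Definition Valuation (sigma : {set V * option V}) (x : option V) (v : profile d) : Prop :=
  match x with
  | None => v = PVec 0
  | Some s =>
      (forall tau, strategy1 tau -> exists m, isMaxOf (PlayProfile sigma tau s) m) /\
      isMinOf (fun m => exists tau, strategy1 tau /\ isMaxOf (PlayProfile sigma tau s) m) v
  end.

Definition Vbot : option V -> profile d :=
  fun x => if x is Some _ then PInf else PVec 0.

Definition Fsigma (sigma : {set V * option V}) (W : option V -> profile d)
  : option V -> profile d :=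
  fun x =>
    match x with
    | None => PVec 0
    | Some s =>
        if o s then
          vadd (wp s) (pmin [seq W t | t <- enum [pred t : option V | (s, t) \in E1]])
        else
          vadd (wp s) (pmax [seq W t | t <- enum [pred t : option V | (s, t) \in sigma]])
    end.
End Arena.

(* Main.v *)
Require Import Defs.
From mathcomp Require Import all_boot all_order all_algebra.
From mathcomp Require Import zify.
From Stdlib Require Import Lia.
From Stdlib Require Import Classical ClassicalEpsilon FunctionalExtensionality.
Set Implicit Arguments. Unset Strict Implicit. Unset Printing Implicit Defensive.
Import Order.TTheory GRing.Theory Num.Theory.
Local Open Scope ring_scope.

Section Ord.
Variable d : nat.
Implicit Types p q r : {ffun 'I_d -> int}.
Implicit Types x y z : profile d.

Lemma vec_ltP p q : reflect (exists k : 'I_d, [/\ p k != q k,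
    (forall j : 'I_d, (k < j)%N -> p j = q j) &
    (if odd k then q k < p k else p k < q k)]) (vec_lt p q).
Proof.
apply: (iffP existsP) => [[k /and3P[H1 /forallP H2 H3]]|[k [H1 H2 H3]]]; exists k.
  by split=> // j kj; apply/eqP; move: (H2 j); rewrite kj.
by apply/and3P; split=> //; apply/forallP => j; apply/implyP => kj; rewrite H2.
Qed.

Lemma vec_lt_irr p : ~~ vec_lt p p.
Proof. by apply/vec_ltP => -[k [/eqP]]. Qed.

Lemma vec_lt_trans p q r : vec_lt p q -> vec_lt q r -> vec_lt p r.
Proof.
move=> /vec_ltP[k1 [N1 E1 L1]] /vec_ltP[k2 [N2 E2 L2]]; apply/vec_ltP.
case: (ltngtP k1 k2) => [lt12|lt21|eq12].
- exists k2; have e := E1 _ lt12; rewrite e; split=> //.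
  move=> j kj; rewrite E1 ?E2 //; exact: ltn_trans kj.
- exists k1; have e := E2 _ lt21; rewrite -e; split=> //.
  move=> j kj; rewrite E1 ?E2 //; exact: ltn_trans kj.
- have ek : k1 = k2 by apply: val_inj.
  subst k2; exists k1; split.
  + case: (odd k1) L1 L2 => L1 L2.
      by rewrite gt_eqF // (lt_trans L2 L1).
    by rewrite lt_eqF // (lt_trans L1 L2).
  + by move=> j kj; rewrite E1 ?E2.
  + by case: (odd k1) L1 L2 => L1 L2; [apply: lt_trans L2 L1|apply: lt_trans L1 L2].
Qed.

Lemma vec_lt_asym p q : vec_lt p q -> vec_lt q p -> False.
Proof. by move=> a b; move: (vec_lt_trans a b); rewrite (negbTE (vec_lt_irr p)). Qed.

Lemma vec_total p q : p != q -> vec_lt p q || vec_lt q p.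
Proof.
move=> npq.
have [k0 Hk0] : exists k, p k != q k.
  apply/existsP; apply: contraR npq => /existsPn H; apply/eqP/ffunP => k.
  by apply/eqP; move: (H k); rewrite negbK.
case: (@arg_maxnP _ k0 (fun k => p k != q k) (fun k : 'I_d => (k : nat)) Hk0) => k Hk Hmax.
have E : forall j : 'I_d, (k < j)%N -> p j = q j.
  move=> j kj; apply/eqP; apply: contraTT kj => Hj; rewrite -leqNgt; exact: Hmax.
case/orP: (lt_total Hk) => L.
- case Ok: (odd k).
  + apply/orP; right; apply/vec_ltP; exists k; split; first by rewrite eq_sym.
    * by move=> j kj; rewrite E.
    * by rewrite Ok.
  + apply/orP; left; apply/vec_ltP; exists k; split => //; by rewrite Ok.
- case Ok: (odd k).
  + apply/orP; left; apply/vec_ltP; exists k; split => //; by rewrite Ok.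
  + apply/orP; right; apply/vec_ltP; exists k; split; first by rewrite eq_sym.
    * by move=> j kj; rewrite E.
    * by rewrite Ok.
Qed.

Lemma vec_lt_add a p q : vec_lt (a + p) (a + q) = vec_lt p q.
Proof.
apply/vec_ltP/vec_ltP => -[k [N E L]]; exists k; split.
- by move: N; rewrite !ffunE (can_eq (addKr (a k))).
- by move=> j kj; move: (E j kj); rewrite !ffunE => /addrI.
- by move: L; rewrite !ffunE !ltrD2l.
- by rewrite !ffunE (can_eq (addKr (a k))).
- by move=> j kj; rewrite !ffunE E.
- by rewrite !ffunE !ltrD2l.
Qed.

Lemma ple_refl x : prof_le x x.
Proof. by case: x => //= p; rewrite eqxx. Qed.

Lemma ple_top x : prof_le x PInf.
Proof. by case: x. Qed.

Lemma ple_bot x : prof_le PNegInf x.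
Proof. by case: x. Qed.

Lemma ple_botE x : prof_le x PNegInf -> x = PNegInf.
Proof. by case: x. Qed.

Lemma ple_topE x : prof_le PInf x -> x = PInf.
Proof. by case: x. Qed.

Lemma ple_trans x y z : prof_le x y -> prof_le y z -> prof_le x z.
Proof.
case: x => [|//|p]; case: y => [|//|q]; case: z => [|//|r] //=.
case/orP=> [/eqP->//|pq]; case/orP=> [/eqP<-|qr]; first by rewrite pq orbT.
by rewrite (vec_lt_trans pq qr) orbT.
Qed.

Lemma ple_total x y : prof_le x y || prof_le y x.
Proof.
case: x => [|//|p]; case: y => [|//|q] //=.
by case: (eqVneq p q) => [->|/vec_total/orP[]->]; rewrite ?eqxx ?orbT.
Qed.

Lemma ple_anti x y : prof_le x y -> prof_le y x -> x = y.
Proof.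
case: x => [|//|p]; case: y => [|//|q] //=.
case/orP=> [/eqP->//|pq]; case/orP=> [/eqP->//|qp].
by case: (vec_lt_asym pq qp).
Qed.

Lemma vadd_mono a x y : prof_le x y -> prof_le (vadd a x) (vadd a y).
Proof.
case: x => [|//|p]; case: y => [|//|q] //=.
by rewrite vec_lt_add (can_eq (addKr a)).
Qed.

Lemma lt_not_ge p q : vec_lt p q -> prof_le (PVec q) (PVec p) -> False.
Proof.
move=> pq /= /orP[/eqP E|qp]; first by subst; move: pq; rewrite (negbTE (vec_lt_irr _)).
exact: vec_lt_asym pq qp.
Qed.

Section PM.
Variables (T : eqType) (W : T -> profile d).

Lemma pmax_ge l t : t \in l -> prof_le (W t) (pmax [seq W u | u <- l]).
Proof.
elim: l => //= u l IH; rewrite in_cons /pmax2 => /orP[/eqP->|tl].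
  by case: ifP => // _; exact: ple_refl.
case: ifP => H; first exact: IH.
apply: ple_trans (IH tl) _; by move: (ple_total (W u) (pmax [seq W u | u <- l])); rewrite H.
Qed.

Lemma pmin_le l t : t \in l -> prof_le (pmin [seq W u | u <- l]) (W t).
Proof.
elim: l => //= u l IH; rewrite in_cons /pmin2 => /orP[/eqP->|tl].
  case: ifP => H; first exact: ple_refl.
  by move: (ple_total (W u) (pmin [seq W u | u <- l])); rewrite H.
case: ifP => H; last exact: IH.
exact: ple_trans H (IH tl).
Qed.

Lemma pmax_mem l : l != [::] -> exists2 t, t \in l & pmax [seq W u | u <- l] = W t.
Proof.
elim: l => //= u l IH _; case: (eqVneq l [::]) => [->|/IH [t tl Et]] /=.
  exists u; first by rewrite mem_head.
  rewrite /pmax2; case: ifP => // /ple_botE; by [].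
rewrite /pmax2 Et; case: ifP => _; first by exists t; rewrite // in_cons tl orbT.
by exists u; rewrite ?mem_head.
Qed.

Lemma pmin_mem l : l != [::] -> exists2 t, t \in l & pmin [seq W u | u <- l] = W t.
Proof.
elim: l => //= u l IH _; case: (eqVneq l [::]) => [->|/IH [t tl Et]] /=.
  by exists u; rewrite ?mem_head // /pmin2 ple_top.
rewrite /pmin2 Et; case: ifP => _; first by exists u; rewrite ?mem_head.
by exists t; rewrite // in_cons tl orbT.
Qed.
End PM.

Lemma pmax_mono (T : eqType) (W1 W2 : T -> profile d) l :
  (forall t, t \in l -> prof_le (W1 t) (W2 t)) ->
  prof_le (pmax [seq W1 u | u <- l]) (pmax [seq W2 u | u <- l]).
Proof.
move=> H; case: (eqVneq l [::]) => [->|/(pmax_mem W1)[t tl ->]]; first exact: ple_refl.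
exact: ple_trans (H t tl) (pmax_ge W2 tl).
Qed.

Lemma pmin_mono (T : eqType) (W1 W2 : T -> profile d) l :
  (forall t, t \in l -> prof_le (W1 t) (W2 t)) ->
  prof_le (pmin [seq W1 u | u <- l]) (pmin [seq W2 u | u <- l]).
Proof.
move=> H; case: (eqVneq l [::]) => [->|/(pmin_mem W2)[t tl ->]]; first exact: ple_refl.
exact: ple_trans (pmin_le W1 tl) (H t tl).
Qed.

End Ord.


Lemma path_iota (T : Type) (e : rel T) (g : nat -> T) :
  (forall n, e (g n) (g n.+1)) ->
  forall m i, path e (g i) (map g (iota i.+1 m)).
Proof. move=> Hg; elim=> //= m IH i; by rewrite Hg IH. Qed.

Lemma cycle_iota (T : Type) (e : rel T) (g : nat -> T) :
  (forall n, e (g n) (g n.+1)) ->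
  forall i j, (i < j)%N -> g j = g i -> cycle e (map g (iota i (j - i))).
Proof.
move=> Hg i j ij gji.
have -> : (j - i = (j - i.+1).+1)%N by rewrite subnSK.
rewrite /= -cats1.
have -> : map g (iota i.+1 (j - i.+1)) ++ [:: g i] = map g (iota i.+1 (j - i.+1 + 1)).
  by rewrite iotaD map_cat /= subnKC // gji.
exact: (path_iota Hg).
Qed.

Lemma pigeon (T : finType) (g : nat -> T) :
  exists i j, [/\ (i < j)%N, (j <= #|T|)%N & g i = g j].
Proof.
have : ~~ uniq (map g (iota 0 #|T|.+1)).
  apply/negP => /card_uniqP; rewrite size_map size_iota => H.
  by move: (max_card (mem (map g (iota 0 #|T|.+1)))); rewrite H ltnn.
case/(uniqPn (g 0)) => i [j [ij]]; rewrite size_map size_iota ltnS => jn.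
rewrite !(nth_map 0) ?size_iota //; last exact: ltn_trans ij _.
rewrite !nth_iota //; last exact: ltn_trans ij _.
by move=> e; exists i, j; split.
Qed.

Lemma lasso (T : Type) (e : rel T) (x : T) (l : seq T) (i j : nat) :
  path e x l -> (i < j)%N -> (j <= size l)%N ->
  nth x (x :: l) i = nth x (x :: l) j ->
  exists f : nat -> T, f 0%N = x /\ forall n, e (f n) (f n.+1).
Proof.
move=> /(pathP x) Hp ij jl Eij.
have He : forall m, (m < j)%N -> e (nth x (x :: l) m) (nth x (x :: l) m.+1).
  move=> m mj; exact: Hp (leq_trans mj jl).
set per := (j - i)%N.
have per0 : (0 < per)%N by rewrite subn_gt0.
pose h n := if (n < i)%N then n else (i + (n - i) %% per)%N.
exists (fun n => nth x (x :: l) (h n)); split.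
  rewrite /h; case: ifP => // /negbT; rewrite -leqNgt leqn0 => /eqP ->.
  by rewrite sub0n mod0n.
move=> n; rewrite /h.
case: (ltnP n i) => ni.
  case: (ltnP n.+1 i) => ni'; first by apply: He; lia.
  have -> : i = n.+1 by lia.
  rewrite subnn mod0n addn0; apply: He; lia.
have -> : (n.+1 < i)%N = false by lia.
rewrite subSn //.
set r := ((n - i) %% per)%N.
have rlt : (r < per)%N by rewrite /r ltn_mod.
have Hdiv := divn_eq (n - i) per.
have Hr : ((n - i).+1 %% per = if r.+1 == per then 0 else r.+1)%N.
  rewrite {1}Hdiv -addnS modnMDl.
  case: eqP => [->|/eqP ne]; first by rewrite modnn.
  by rewrite modn_small // ltn_neqAle ne rlt.
rewrite Hr; case: eqP => [Er|_].
  rewrite addn0 Eij.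
  have -> : (i + r = j.-1)%N by rewrite /per in Er; lia.
  have Hj : (0 < j)%N by lia.
  by have := He j.-1; rewrite prednK //; apply; lia.
rewrite addnS; apply: He.
by rewrite -(subnKC (ltnW ij)) -/per ltn_add2l.
Qed.

Section Cyc.
Variables (V : finType) (d : nat) (c : V -> 'I_d).

Lemma sum_wpE (s : seq V) (j : 'I_d) :
  (\sum_(v <- s) wp c v) j = (count (fun v => c v == j) s)%:Z.
Proof.
elim: s => [|v s IH]; first by rewrite big_nil ffunE.
by rewrite big_cons ffunE IH /= ffunE eq_sym PoszD.
Qed.

Lemma argmax_seq (s : seq V) : s != [::] ->
  exists2 v0, v0 \in s & forall v, v \in s -> (c v <= c v0)%N.
Proof.
elim: s => // v s IH _; case: (eqVneq s [::]) => [->|/IH [w ws Hw]].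
  by exists v; rewrite ?mem_head // => u; rewrite inE => /eqP->.
case: (leqP (c v) (c w)) => H.
  exists w; first by rewrite in_cons ws orbT.
  by move=> u; rewrite in_cons => /orP[/eqP->//|/Hw].
exists v; first exact: mem_head.
move=> u; rewrite in_cons => /orP[/eqP->//|/Hw uw]; exact: leq_trans uw (ltnW H).
Qed.

Lemma bigmax_at (s : seq V) v0 : v0 \in s -> (forall v, v \in s -> (c v <= c v0)%N) ->
  (\max_(v <- s) (c v : nat))%N = c v0.
Proof.
move=> v0s H; apply/eqP; rewrite eqn_leq; apply/andP; split.
  by apply/bigmax_leqP_seq => v vs _; exact: H.
exact: (@leq_bigmax_seq V s xpredT (fun v => (c v : nat)) v0 v0s isT).
Qed.

Lemma cyc_pos (s : seq V) : s != [::] -> ~~ odd (\max_(v <- s) (c v : nat)) ->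
  vec_lt 0 (\sum_(v <- s) wp c v).
Proof.
move=> /argmax_seq [v0 v0s Hv0]; rewrite (bigmax_at v0s Hv0) => ev.
have cnt : (0 < count (fun v => c v == c v0) s)%N.
  by rewrite -has_count; apply/hasP; exists v0.
apply/vec_ltP; exists (c v0); split.
- rewrite sum_wpE ffunE; apply/eqP => H; move: cnt; lia.
- move=> j kj; rewrite sum_wpE ffunE.
  have -> : count (fun v => c v == j) s = 0%N.
    apply/eqP; rewrite -leqn0 leqNgt -has_count; apply/hasP => -[v vs /eqP cv].
    by move: (Hv0 v vs); rewrite cv leqNgt kj.
  by [].
- by rewrite (negbTE ev) sum_wpE ffunE; lia.
Qed.
End Cyc.

Section Won.
Variables (V : finType) (d : nat) (E : rel V) (o : V -> bool) (c : V -> 'I_d)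
  (sigma : {set V * option V}).
Hypothesis Hreas : reasonable E o c sigma.

Lemma won_gen (g : nat -> V) :
  (forall n, edge_sigma E o sigma (g n) (g n.+1)) ->
  exists k, (forall N, exists n, (N <= n)%N /\ (c (g n) : nat) = k) /\ ~~ odd k /\
     forall k', (forall N, exists n, (N <= n)%N /\ (c (g n) : nat) = k') -> (k' <= k)%N.
Proof.
move=> Hg.
pose infv v := forall N, exists n, (N <= n)%N /\ g n = v.
pose inb v : bool := if excluded_middle_informative (infv v) then true else false.
have inbP : forall v, inb v <-> infv v.
  by move=> v; rewrite /inb; case: excluded_middle_informative.
have Hl : forall l : seq V, exists N, forall v, v \in l -> ~~ inb v ->
    forall n, (N <= n)%N -> g n != v.
  elim=> [|v l [N1 HN1]]; first by exists 0%N.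
  case Hv: (inb v).
    exists N1 => u; rewrite in_cons => /orP[/eqP->|ul]; first by rewrite Hv.
    exact: HN1.
  have : ~ infv v by move=> /inbP; rewrite Hv.
  move=> /not_all_ex_not [N2 HN2].
  exists (maxn N1 N2) => u; rewrite in_cons => /orP[/eqP Eu|ul] Hu n Hn.
    subst u; apply/eqP => gn; apply: HN2; exists n; split => //; lia.
  by apply: HN1 => //; lia.
have [N0 HN0] : exists N0, forall n, (N0 <= n)%N -> inb (g n).
  have [N HN] := Hl (enum V); exists N => n Hn; apply/negPn/negP => H.
  by move: (HN (g n) (mem_enum _ _) H n Hn); rewrite eqxx.
case: (@arg_maxnP _ (g N0) inb (fun v => (c v : nat)) (HN0 _ (leqnn _))) => vs Hvs Hmax.
have Hinf := proj1 (inbP vs) Hvs.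
exists (c vs); split; [|split].
- move=> N; have [n [Nn gn]] := Hinf N; exists n; by rewrite gn.
- have [n1 [Nn1 gn1]] := Hinf N0.
  have [n2 [Nn2 gn2]] := Hinf n1.+1.
  have Hc := cycle_iota Hg Nn2 (etrans gn2 (esym gn1)).
  have ne : map g (iota n1 (n2 - n1)) != [::].
    by rewrite -size_eq0 size_map size_iota subn_eq0 -ltnNge.
  have := Hreas ne Hc.
  rewrite (@bigmax_at V d c _ vs) //.
    apply/mapP; exists n1; rewrite ?gn1 // mem_iota leqnn /=; lia.
  move=> v /mapP [m]; rewrite mem_iota => /andP[m1 _] ->.
  apply: Hmax; apply: HN0; exact: leq_trans Nn1 m1.
- move=> k' Hk'; have [n [Nn <-]] := Hk' N0; apply: Hmax; exact: HN0.
Qed.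

Lemma won_run (tau : {set V * option V}) (f : nat -> option V) s :
  tau \subset E1 E o -> f 0%N = Some s ->
  (forall n, st_edge sigma tau (f n) (f n.+1)) -> won0 c f.
Proof.
move=> Htau f0 Hf.
pose g n := if f n is Some a then a else s.
have Hfg : forall n, f n = Some (g n).
  move=> n; rewrite /g; move: (Hf n); by case: (f n).
have Hg : forall n, edge_sigma E o sigma (g n) (g n.+1).
  move=> n; move: (Hf n); rewrite !Hfg /st_edge /edge_sigma => /orP[->//|H].
  by rewrite (subsetP Htau _ H) orbT.
have [k [H1 [H2 H3]]] := won_gen Hg.
exists k; split; [|split] => //.
- move=> N; have [n [Nn cn]] := H1 N; exists n; split => //; exists (g n); by rewrite Hfg.
- move=> k' Hk'; apply: H3 => N; have [n [Nn [v [fv cv]]]] := Hk' N.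
  exists n; split => //; move: fv; rewrite Hfg => -[->]; exact: cv.
Qed.
End Won.


Section Game.
Variables (V : finType) (d : nat) (E : rel V) (o : V -> bool) (c : V -> 'I_d)
  (sigma : {set V * option V}).
Hypothesis Hreas : reasonable E o c sigma.

Definition G (mn : V -> bool) (T : V -> pred (option V)) (W : option V -> profile d)
  : option V -> profile d :=
  fun x => match x with
  | None => PVec 0
  | Some a => vadd (wp c a) (if mn a then pmin [seq W t | t <- enum (T a)]
                             else pmax [seq W t | t <- enum (T a)])
  end.

Section GProps.
Variables (mn : V -> bool) (T : V -> pred (option V)).
Hypothesis HT : forall a, exists t, t \in T a.

Lemma enum_ne a : enum (T a) != [::].
Proof.
have [t Ht] := HT a; apply/eqP => H; by move: (mem_enum (T a) t); rewrite H Ht.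
Qed.

Lemma G_mono W1 W2 : (forall y, prof_le (W1 y) (W2 y)) ->
  forall x, prof_le (G mn T W1 x) (G mn T W2 x).
Proof.
move=> H [a|]; last exact: ple_refl.
rewrite /=; apply: vadd_mono; case: (mn a).
  by apply: pmin_mono => t _; exact: H.
by apply: pmax_mono => t _; exact: H.
Qed.

Lemma G_nn W : (forall y, W y <> PNegInf) -> forall x, G mn T W x <> PNegInf.
Proof.
move=> H [a|] //=; case: (mn a).
  case: (eqVneq (enum (T a)) [::]) => [->//|/(pmin_mem W)[t _ ->]].
  by case Ht: (W t) (H t) => //.
have [t _ ->] := pmax_mem W (enum_ne a).
by case Ht: (W t) (H t) => //.
Qed.

Lemma iterG_None i : iter i (G mn T) (@Vbot V d) None = PVec 0.
Proof. by case: i. Qed.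

Lemma iterG_nn i x : iter i (G mn T) (@Vbot V d) x <> PNegInf.
Proof. elim: i x => [[]//|i IH] x /=; exact: G_nn. Qed.

Lemma iterG_dec i x :
  prof_le (iter i.+1 (G mn T) (@Vbot V d) x) (iter i (G mn T) (@Vbot V d) x).
Proof.
elim: i x => [|i IH] x.
  by case: x => [a|]; rewrite /= /G /Vbot ?eqxx; [exact: ple_top|].
by apply: G_mono.
Qed.
End GProps.

Lemma pp_cons a p :
  path_profile c (Some a :: p) = wp c a + path_profile c p.
Proof. by rewrite /path_profile big_cons. Qed.

Lemma pp_none : path_profile c [:: (None : option V)] = 0.
Proof. by rewrite /path_profile big_cons big_nil addr0. Qed.

Section UB.
Variables (tau : {set V * option V}) (W : option V -> profile d).
Hypothesis Htau : tau \subset E1 E o.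
Hypothesis Hsucc : forall a, exists t, st_edge sigma tau (Some a) t.
Hypothesis WNone : W None = PVec 0.
Hypothesis Wnn : forall x, W x <> PNegInf.
Hypothesis Wedge : forall a t, st_edge sigma tau (Some a) t ->
  prof_le (vadd (wp c a) (W t)) (W (Some a)).

Lemma ub_fin p x : path (st_edge sigma tau) x p -> last x p = None ->
  prof_le (PVec (path_profile c (x :: p))) (W x).
Proof.
elim: p x => [|y p IH] [a|] //.
- by rewrite pp_none WNone => _ _; exact: ple_refl.
- rewrite [path _ _ _]/= [last _ _]/= => /andP[Hay Hp] Hl.
  rewrite pp_cons; apply: ple_trans (Wedge Hay).
  exact: (vadd_mono (wp c a) (IH y Hp Hl)).
Qed.

Lemma ub s x : PlayProfile c sigma tau s x -> prof_le x (W (Some s)).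
Proof.
case=> [[p [Hp [Hmax ->]]]|[f [f0 [Hf [[_ ->]|[_ ->]]]]]]; last exact: ple_bot.
  apply: ub_fin => //.
  case Hl: (last (Some s) p) => [a|] //.
  have [t Ht] := Hsucc a; by move: (Hmax t); rewrite Hl Ht.
pose g n := if f n is Some a then a else s.
have Hfg : forall n, f n = Some (g n).
  move=> n; rewrite /g; move: (Hf n); by case: (f n).
have Hg : forall n, edge_sigma E o sigma (g n) (g n.+1).
  move=> n; move: (Hf n); rewrite !Hfg /st_edge /edge_sigma => /orP[->//|H].
  by rewrite (subsetP Htau _ H) orbT.
have g0 : g 0%N = s by move: f0; rewrite Hfg => -[].
have Hedge : forall n, prof_le (vadd (wp c (g n)) (W (Some (g n.+1)))) (W (Some (g n))).
  by move=> n; apply: Wedge; rewrite -!Hfg; exact: Hf n.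
case HWs: (W (Some s)) => [||w0]; first by case: (@Wnn (Some s) HWs).
  by [].
have Hvec : forall n, exists w, W (Some (g n)) = PVec w.
  elim=> [|n [w Hw]]; first by rewrite g0 HWs; exists w0.
  move: (Hedge n) (@Wnn (Some (g n.+1))); rewrite Hw.
  case: (W (Some (g n.+1))) => [||w'] H1 H2; [by case: H2 | by move: H1 | by exists w'].
pose wv n := if W (Some (g n)) is PVec w then w else 0.
have Ew : forall n, W (Some (g n)) = PVec (wv n).
  by move=> n; rewrite /wv; have [w ->] := Hvec n.
have Hstep : forall n, prof_le (PVec (wp c (g n) + wv n.+1)) (PVec (wv n)).
  by move=> n; move: (Hedge n); rewrite !Ew.
have chain : forall m n,
    prof_le (PVec (\sum_(k <- iota n m) wp c (g k) + wv (n + m)%N)) (PVec (wv n)).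
  elim=> [|m IH] n; first by rewrite big_nil add0r addn0 ple_refl.
  rewrite [iota _ _]/= big_cons -addrA -addSnnS.
  apply: ple_trans (Hstep n).
  exact: (vadd_mono (wp c (g n)) (IH n.+1)).
have [i [j [ij _ gij]]] := pigeon g.
have Hc := cycle_iota Hg ij (esym gij).
have ne : map g (iota i (j - i)) != [::].
  by rewrite -size_eq0 size_map size_iota subn_eq0 -ltnNge.
have pos := cyc_pos ne (Hreas ne Hc); rewrite big_map in pos.
move: (chain (j - i)%N i); rewrite subnKC ?(ltnW ij) // .
have -> : wv j = wv i by rewrite /wv gij.
rewrite addrC => H; exfalso; apply: (lt_not_ge _ H).
by rewrite -{1}[wv i]addr0 vec_lt_add.
Qed.
End UB.

Section LB.
Variables (tau : {set V * option V}) (Wq : nat -> option V -> profile d).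
Hypothesis Htau : tau \subset E1 E o.
Hypothesis WqNone : forall i, Wq i None = PVec 0.
Hypothesis Hstep : forall i a, exists t, st_edge sigma tau (Some a) t /\
  prof_le (Wq i.+1 (Some a)) (vadd (wp c a) (Wq i t)).

Lemma lb_paths i a : exists p, path (st_edge sigma tau) (Some a) p /\
  ((last (Some a) p = None /\ prof_le (Wq i (Some a)) (PVec (path_profile c (Some a :: p))))
   \/ (None \notin p /\ size p = i)).
Proof.
elim: i a => [|i IH] a; first by exists [::]; split => //; right.
have [[b|] [Hab Hle]] := Hstep i a.
- have [p [Hp Hc]] := IH b.
  exists (Some b :: p); split; first by apply/andP.
  case: Hc => [[Hl Hpl]|[Hn Hs]]; [left|right].
    split => //; rewrite pp_cons; apply: ple_trans Hle _.
    exact: (vadd_mono (wp c a) Hpl).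
  by rewrite in_cons negb_or Hn /= Hs.
- exists [:: None]; split; first by apply/andP.
  left; split => //; rewrite pp_cons pp_none; move: Hle; by rewrite WqNone.
Qed.

Lemma lb i s : (#|V| <= i)%N ->
  exists x, PlayProfile c sigma tau s x /\ prof_le (Wq i (Some s)) x.
Proof.
move=> Hi; have [p [Hp [[Hl Hle]|[Hn Hs]]]] := lb_paths i s.
  exists (PVec (path_profile c (Some s :: p))); split => //.
  by left; exists p; split => //; split => // y; rewrite Hl.
exists PInf; split; last exact: ple_top.
have Hnu : ~~ uniq (Some s :: p).
  apply/negP => /card_uniqP Hc.
  have : (#|Some s :: p| <= #|predC1 (None : option V)|)%N.
    apply: subset_leq_card; apply/subsetP => y; rewrite !inE => /orP[/eqP->//|yp].
    by apply: contraTneq yp => ->.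
  by rewrite Hc cardC1 card_option /= Hs ltnNge Hi.
have [i0 [j0 [ij jl Eij]]] := uniqPn (Some s) Hnu.
have [f [f0 Hf]] := lasso Hp ij jl Eij.
right; exists f; split => //; split => //; left; split => //.
by have := won_run Hreas Htau f0; apply.
Qed.
End LB.

Lemma maxof (tau : {set V * option V}) (W : option V -> profile d) (s : V) :
  tau \subset E1 E o ->
  (forall a, exists t, st_edge sigma tau (Some a) t) ->
  W None = PVec 0 -> (forall x, W x <> PNegInf) ->
  (forall a t, st_edge sigma tau (Some a) t ->
     prof_le (vadd (wp c a) (W t)) (W (Some a))) ->
  (exists x, PlayProfile c sigma tau s x /\ prof_le (W (Some s)) x) ->
  isMaxOf (PlayProfile c sigma tau s) (W (Some s)).
Proof.
move=> Htau Hsucc WN Wnn Wedge [x [Px Hx]].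
have UB := ub Htau Hsucc WN Wnn Wedge.
have Ex : x = W (Some s) by apply: ple_anti => //; exact: UB.
split; first by rewrite -Ex.
by move=> y Py; exact: UB.
Qed.

Section Main.
Hypothesis HE : forall v, exists w, E v w.
Hypothesis Hsigma : strategy0 E o sigma.

Definition Tm (a : V) : pred (option V) :=
  if o a then [pred t : option V | (a, t) \in E1 E o]
  else [pred t : option V | (a, t) \in sigma].

Lemma Fsigma_G W x : Fsigma E o c sigma W x = G o Tm W x.
Proof. by case: x => [a|] //=; rewrite /Tm; case: (o a). Qed.

Lemma iter_eq i : iter i (Fsigma E o c sigma) (@Vbot V d) = iter i (G o Tm) (@Vbot V d).
Proof.
elim: i => //= i ->; apply: functional_extensionality => x; exact: Fsigma_G.
Qed.

Lemma HTm a : exists t, t \in Tm a.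
Proof.
rewrite /Tm; case Ho: (o a).
  have [w Hw] := HE a; exists (Some w); by rewrite inE /E1 inE /= Ho Hw.
have [t Ht] := Hsigma.2 a (negbT Ho); exists t; by rewrite inE.
Qed.
End Main.
End Game.


Unset Implicit Arguments.
Local Close Scope ring_scope.

Theorem mainTheorem7 (V : finType) (d : nat) (E : rel V) (o : V -> bool) (c : V -> 'I_d)
  (HE : forall v, exists w, E v w)
  (sigma : {set V * option V})
  (Hsigma : strategy0 E o sigma)
  (Hreas : reasonable E o c sigma) :
  forall i : nat, (#|V| <= i)%N ->
    forall x : option V,
      Valuation E o c sigma x (iter i (Fsigma E o c sigma) (@Vbot V d) x).
Proof.
move=> i Hi x; rewrite iter_eq.
have HT := HTm HE Hsigma.
pose Wq j := iter j (G c o (Tm E o sigma)) (@Vbot V d).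
case: x => [s|]; last exact: iterG_None.
have lbm : forall tau, strategy1 E o tau ->
    exists x, PlayProfile c sigma tau s x /\ prof_le (Wq i (Some s)) x.
  move=> tau [Htau Hτ]; apply: (lb Hreas Htau (Wq := Wq)) => // [j|j a].
    exact: iterG_None.
  rewrite /Wq [iter j.+1 _ _]/= /G; case Ho: (o a).
    have [t Ht] := Hτ a Ho.
    exists t; split; first by rewrite /st_edge Ht orbT.
    apply: vadd_mono; apply: pmin_le.
    by rewrite mem_enum /Tm Ho inE (subsetP Htau _ Ht).
  have [t Ht Et] := pmax_mem (iter j (G c o (Tm E o sigma)) (@Vbot V d)) (enum_ne HT a).
  exists t; split; last by rewrite Et; exact: ple_refl.
  by move: Ht; rewrite mem_enum /Tm Ho inE /st_edge => ->.
split.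
- move=> tau [Htau Hτ].
  have Hsucc : forall a, exists t, st_edge sigma tau (Some a) t.
    move=> a; case Ho: (o a).
      by have [t Ht] := Hτ a Ho; exists t; rewrite /st_edge Ht orbT.
    by have [t Ht] := Hsigma.2 a (negbT Ho); exists t; rewrite /st_edge Ht.
  pose Tt a : pred (option V) := [pred t | st_edge sigma tau (Some a) t].
  have HTt : forall a, exists t, t \in Tt a.
    by move=> a; have [t Ht] := Hsucc a; exists t.
  pose Wt j := iter j (G c (fun _ => false) Tt) (@Vbot V d).
  exists (Wt i (Some s)); apply: (maxof Hreas Htau Hsucc).
  + exact: iterG_None.
  + exact: iterG_nn.
  + move=> a t Hat; apply: ple_trans (iterG_dec _ _ _ _ _).
    rewrite [iter i.+1 _ _]/= /G; apply: vadd_mono; apply: pmax_ge.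
    by rewrite mem_enum.
  + apply: (lb Hreas Htau (Wq := Wt)) => // [j|j a]; first exact: iterG_None.
    have [t Ht Et] := pmax_mem (Wt j) (enum_ne HTt a).
    exists t; split; first by move: Ht; rewrite mem_enum.
    by rewrite [Wt j.+1 _]/= /G Et; exact: ple_refl.
- pose taus := [set e : V * option V | [&& o e.1, e \in E1 E o &
      prof_le (Wq i e.2) (pmin [seq Wq i t | t <- enum (Tm E o sigma e.1)])]].
  have Htaus : taus \subset E1 E o.
    by apply/subsetP => e; rewrite inE => /and3P[].
  have Htsucc : forall a, o a -> exists t, (a, t) \in taus.
    move=> a Ho; have [t Ht Et] := pmin_mem (Wq i) (enum_ne HT a).
    exists t; rewrite inE /= Ho Et ple_refl andbT.
    by move: Ht; rewrite mem_enum /Tm Ho inE.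
  have Hsucc : forall a, exists t, st_edge sigma taus (Some a) t.
    move=> a; case Ho: (o a).
      by have [t Ht] := Htsucc a Ho; exists t; rewrite /st_edge Ht orbT.
    by have [t Ht] := Hsigma.2 a (negbT Ho); exists t; rewrite /st_edge Ht.
  have Hst : strategy1 E o taus by split.
  split.
  + exists taus; split => //; apply: (maxof Hreas Htaus Hsucc).
    * exact: iterG_None.
    * exact: iterG_nn.
    * move=> a t Hat; apply: ple_trans (iterG_dec _ _ _ _ _).
      rewrite [iter i.+1 _ _]/= /G -/(Wq i).
      move: Hat; rewrite /st_edge => /orP[Hs|Ht].
        have := subsetP Hsigma.1 _ Hs; rewrite inE /= => /andP[Ho _].
        rewrite (negbTE Ho); apply: vadd_mono; apply: pmax_ge.
        by rewrite mem_enum /Tm (negbTE Ho) inE.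
      move: Ht; rewrite inE /= => /and3P[-> _ Hle]; exact: vadd_mono.
    * exact: lbm.
  + move=> m [tau [Htau [Pm Hm]]].
    have [x [Px Hx]] := lbm tau Htau.
    exact: ple_trans Hx (Hm x Px).
Qed.
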